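(* Let $G$ be a connected graph that is $(5,\epsilon)$-distance-almost-uniform. Then $G^4$ is $(2,\epsilon)$-distance-almost-uniform and $diam(G^4)=\lceil diam(G)/4\rceil$.
   Context: For a graph $G$ on $n$ vertices and $v\in V(G)$, $A_s(v)$ is the set of vertices at distance exactly $s$ from $v$. $G$ is $(k,\epsilon)$-distance-almost-uniform if there exists $r$ such that $\max_{i=0}^{k-1}|A_{r+i}(u)|\ge n(1-\epsilon)$ for all $u\in V(G)$. For an undirected graph $G=(V,E)$, $G^k$ is the graph on vertex set $V$ with edge set $\{uv: 0<d_G(u,v)\le k\}$. *)

(* Defs.v *)
From mathcomp Require Import all_boot all_order all_algebra.
Set Implicit Arguments. Unset Strict Implicit. Unset Printing Implicit Defensive.
Import Order.TTheory GRing.Theory Num.Theory.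

Definition simple_graph (T : finType) (e : rel T) : Prop :=
  symmetric e /\ irreflexive e.

Fixpoint dist_le (T : finType) (e : rel T) (k : nat) (u v : T) : bool :=
  match k with
  | 0 => u == v
  | k'.+1 => dist_le e k' u v || [exists w, dist_le e k' u w && e w v]
  end.

(* graph distance d_G(u,v): least k with d_G(u,v) <= k (equals #|T| if unreachable;
   only used for connected graphs, where it is the true distance) *)
Definition dist (T : finType) (e : rel T) (u v : T) : nat :=
  find (fun k => dist_le e k u v) (iota 0 #|T|).

Definition connected (T : finType) (e : rel T) : Prop :=
  forall u v : T, connect e u v.

Definition sphere (T : finType) (e : rel T) (s : nat) (v : T) : {set T} :=
  [set x | dist e v x == s].

Definition dist_almost_uniform (R : realFieldType) (T : finType) (e : rel T)
    (k : nat) (eps : R) : Prop :=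
  exists r : nat, forall u : T,
    (#|T|%:R * (1 - eps) <= (\max_(i < k) #|sphere e (r + i) u|)%:R)%R.

Definition graph_pow (T : finType) (e : rel T) (k : nat) : rel T :=
  fun u v => (u != v) && dist_le e k u v.

Definition diam (T : finType) (e : rel T) : nat :=
  \max_(u : T) \max_(v : T) dist e u v.

(* Main.v *)
Require Import Defs.
From mathcomp Require Import all_boot all_order all_algebra.
From mathcomp Require Import zify.
Set Implicit Arguments. Unset Strict Implicit. Unset Printing Implicit Defensive.
Import Order.TTheory GRing.Theory Num.Theory.

Section Aux.
Variables (T : finType).

Lemma dl_mono (f : rel T) k m u v : dist_le f k u v -> dist_le f (k + m) u v.
Proof.
elim: m => [|m IH]; first by rewrite addn0.
by move=> H; rewrite addnS /= IH.
Qed.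

Lemma dl_monoL (f : rel T) k k' u v : dist_le f k u v -> k <= k' -> dist_le f k' u v.
Proof. by move=> H /subnKC <-; apply: dl_mono. Qed.

Lemma dl_comp (f : rel T) a b u v :
  dist_le f (a + b) u v <-> exists w, dist_le f a u w /\ dist_le f b w v.
Proof.
elim: b v => [|b IH] v.
  rewrite addn0; split; first by move=> H; exists v; rewrite /= eqxx.
  by case=> w [H /eqP <-].
rewrite addnS /=; split.
  case/orP.
    by move/IH=> [w [H1 H2]]; exists w; rewrite H1 H2.
  case/existsP=> x /andP [/IH [w [H1 H2]] Hx]; exists w; split=> //.
  by apply/orP; right; apply/existsP; exists x; rewrite H2.
case=> w [H1 /orP [H2|/existsP [x /andP [H2 H3]]]].
  by apply/orP; left; apply/IH; exists w.
apply/orP; right; apply/existsP; exists x; rewrite H3 andbT.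
by apply/IH; exists w.
Qed.

Lemma dl_pow (e : rel T) k u v :
  dist_le (graph_pow e 4) k u v = dist_le e (4 * k) u v.
Proof.
elim: k v => [|k IH] v; first by rewrite muln0.
apply/idP/idP.
  move=> Hk; have : dist_le (graph_pow e 4) k u v || [exists w, dist_le (graph_pow e 4) k u w && graph_pow e 4 w v] := Hk.
  move=> /orP [H|/existsP [w /andP [H /andP [_ H2]]]].
    by rewrite IH in H; apply: (dl_monoL H); lia.
  rewrite mulnS addnC; apply/dl_comp; exists w; split=> //.
  by rewrite -IH.
rewrite mulnS addnC => /dl_comp [w [H1 H2]].
have [<-|Hwv] := eqVneq w v.
  have : dist_le (graph_pow e 4) k u w by rewrite IH.
  by move/(dl_mono 1); rewrite addn1.
change (dist_le (graph_pow e 4) k u v || [exists w, dist_le (graph_pow e 4) k u w && graph_pow e 4 w v]).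
apply/orP; right; apply/existsP; exists w.
by rewrite IH H1 /graph_pow Hwv H2.
Qed.

Lemma distP (f : rel T) u v :
  (exists k, k < #|T| /\ dist_le f k u v) ->
  dist_le f (dist f u v) u v /\ forall k, dist_le f k u v -> dist f u v <= k.
Proof.
case=> k0 [Hk0 H0].
have Hh : has (fun k => dist_le f k u v) (iota 0 #|T|).
  by apply/hasP; exists k0 => //; rewrite mem_iota.
have Hlt : dist f u v < #|T|.
  by move: Hh; rewrite has_find size_iota.
split.
  have := nth_find 0 Hh; rewrite nth_iota; last by rewrite -/(dist f u v).
  by rewrite add0n.
move=> k Hk; rewrite leqNgt; apply/negP => Hkd.
have := before_find 0 Hkd; rewrite nth_iota ?add0n ?Hk //.
by apply: ltn_trans Hkd Hlt.
Qed.

Lemma path_dl (f : rel T) x p : path f x p -> dist_le f (size p) x (last x p).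
Proof.
elim: p x => [|y p IH] x; first by rewrite /= eqxx.
case/andP=> Hxy Hp.
change (dist_le f (1 + size p) x (last y p)).
apply/dl_comp; exists y; split; last exact: IH.
by apply/orP; right; apply/existsP; exists x; rewrite eqxx Hxy.
Qed.

Lemma reach (e : rel T) u v : connect e u v -> exists k, k < #|T| /\ dist_le e k u v.
Proof.
case/connectP=> p Hp Hv.
rewrite Hv; case: (shortenP Hp) => q Hq Hu _.
exists (size q); split; last by apply: path_dl.
have := card_uniqP Hu; rewrite /= => Hs.
have : #|[pred z in u :: q]| <= #|T| by apply: max_card.
by rewrite Hs.
Qed.

Lemma dist_pow (e : rel T) u v : connect e u v ->
  dist (graph_pow e 4) u v = (dist e u v + 3) %/ 4.
Proof.
move=> /reach Hr.
have [H1 H2] := distP Hr.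
have Hr' : exists k, k < #|T| /\ dist_le (graph_pow e 4) k u v.
  case: Hr => k [Hk Hd]; exists k; split=> //.
  by rewrite dl_pow; apply: (dl_monoL Hd); lia.
have [H3 H4] := distP Hr'.
rewrite dl_pow in H3.
have A := H2 _ H3.
have B : dist (graph_pow e 4) u v <= (dist e u v + 3) %/ 4.
  apply: H4; rewrite dl_pow; apply: (dl_monoL H1); lia.
lia.
Qed.

Lemma max_morph (I : finType) (F : I -> nat) :
  \max_(i : I) (F i + 3) %/ 4 = (\max_(i : I) F i + 3) %/ 4.
Proof.
symmetry; apply: (big_morph (fun x => (x + 3) %/ 4) (id1 := 0%N) (op1 := maxn)) => //.
move=> a b; case: (leqP a b) => Hab.
  symmetry; apply/maxn_idPr.
  by apply: leq_div2r; lia.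
symmetry; apply/maxn_idPl.
by apply: leq_div2r; lia.
Qed.

End Aux.

Theorem proposition10 (R : realFieldType) (T : finType) (e : rel T) (eps : R) :
  simple_graph e -> connected e -> dist_almost_uniform e 5 eps ->
  dist_almost_uniform (graph_pow e 4) 2 eps /\
  diam (graph_pow e 4) = (diam e + 3) %/ 4.
Proof.
move=> _ Hc [r Hr]; split.
  exists ((r + 3) %/ 4) => u.
  apply: (le_trans (Hr u)); rewrite ler_nat.
  apply/bigmax_leqP => i _.
  have Hj : (r + i + 3) %/ 4 - (r + 3) %/ 4 < 2.
    have := ltn_ord i; lia.
  apply: (leq_trans _ (leq_bigmax_cond (Ordinal Hj) isT)).
  apply: subset_leq_card; apply/subsetP => x.
  rewrite !inE /= dist_pow // => /eqP ->.
  apply/eqP; lia.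
rewrite /diam.
under eq_bigr => u _ do (under eq_bigr => v _ do rewrite dist_pow //; rewrite max_morph).
by rewrite max_morph.
Qed.
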